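(* In the setting below, $$B_0\ \cong\ \bigoplus_{e\in G_0}\ \bigoplus_{f\in G_0:\ T_e\cap S_f\neq\emptyset}M_{n_{e,f}}(E_e)$$ as unital $K$-algebras, where $n_{e,f}=|T_e\cap S_f|$. Here $B_0$ is a unital subalgebra of $B$ with identity $\sum_{e\in G_0}\sum_{g\in T_e}1_e\delta_e\#v_g$.
   Context: Groupoid conventions. A groupoid is a small category with all morphisms invertible, regarded as the set $G$ of morphisms. For $g\in G$ we have $d(g)=g^{-1}g$ and $r(g)=gg^{-1}$. The product $gh$ is defined iff $d(g)=r(h)$, and then $d(gh)=d(h)$, $r(gh)=r(g)$. $G^2=\{(g,h):d(g)=r(h)\}$, and $G_0$ is the set of identities. For $e\in G_0$: - $G_e=\{g: d(g)=r(g)=e\}$; - $S_e=\{g\in G: d(g)=e\}$; - $T_e=\{g\in G: r(g)=e\}$. Actions. An action of $G$ on a ring $R$ is a pair $\beta=(\{E_g\},\{\beta_g\})$ where each $E_g=E_{r(g)}$ is an ideal of $R$, each $\beta_g:E_{g^{-1}}\to E_g$ is a ring isomorphism, $\beta_e=\mathrm{id}$ for $e\in G_0$, and $\beta_g\beta_h=\beta_{gh}$ on $E_{h^{-1}}$ for $(g,h)\in G^2$. Skew groupoid ring. $R\star_\beta G=\bigoplus_{g\in G}E_g\delta_g$ (the $\delta_g$ are formal symbols), with $(x\delta_g)(y\delta_h)=x\beta_g(y)\delta_{gh}$ if $(g,h)\in G^2$ and $0$ otherwise, for $x\in E_g$, $y\in E_h$. $KG^*$. The free $K$-module with basis $\{v_g\}_{g\in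 G}$, with $v_gv_h=\delta_{g,h}v_g$ and identity $\sum_g v_g$. Weak smash product. For a unital $G$-graded algebra $A=\bigoplus A_g$ (with $A_gA_h\subseteq A_{gh}$ if $(g,h)\in G^2$, and $0$ otherwise), $KG^*$ acts by $v_h\cdot a=a_h$ (the $h$-component). $A\#KG^*=A\otimes_K KG^*$ with $(a\#v_g)(b\#v_h)=a(v_{gh^{-1}}\cdot b)\#v_h$ if $d(g)=d(h)$, and $0$ otherwise. Setting. $K$ is a commutative unital ring and $G$ is a finite groupoid. $R$ is a not necessarily unital $K$-algebra with an action $\beta$ of $G$ (by $K$-linear maps) such that each $E_e$, $e\in G_0$, has an identity element $1_e$; put $1_g:=1_{r(g)}$, the identity of $E_g$. Then $R\star_\beta G$ is a unital $K$-algebra with identity $\sum_{e\in G_0}1_e\delta_e$. It is $G$-graded with $g$-component $E_g\delta_g$, so that $v_k\cdot(a_g\delta_g)=\delta_{k,g}a_g\delta_g$. Let $B=(R\star_\beta G)\#KG^*=\bigoplus_{g,h\in G}E_g\delta_g\#v_h$ and $$B_0=\bigoplus_{g,h\in G:\ d(g)=r(g)=r(h)}E_g\delta_g\#v_h.$$ $M_n(X)$ denotes the $n\times n$ matrix algebra over $X$. *)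

(* Defs.v *)
From HB Require Import structures.
From mathcomp Require Import all_boot all_order all_algebra.
Set Implicit Arguments. Unset Strict Implicit. Unset Printing Implicit Defensive.
Import GRing.Theory.
Local Open Scope ring_scope.

(* Finite groupoids, given as the finite set of morphisms with a       *)
(* partial product (gmul g h is meaningful only when d g = r h).       *)
Record groupoid := Groupoid {
  gcar :> finType;
  gmul : gcar -> gcar -> gcar;
  ginv : gcar -> gcar;
  ginvK : involutive ginv;
  gmulA : forall g h k,
    gmul (ginv g) g = gmul h (ginv h) -> gmul (ginv h) h = gmul k (ginv k) ->
    gmul (gmul g h) k = gmul g (gmul h k);
  gd_mul : forall g h, gmul (ginv g) g = gmul h (ginv h) ->
    gmul (ginv (gmul g h)) (gmul g h) = gmul (ginv h) h;
  gr_mul : forall g h, gmul (ginv g) g = gmul h (ginv h) ->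
    gmul (gmul g h) (ginv (gmul g h)) = gmul g (ginv g);
  gmul_d : forall g, gmul g (gmul (ginv g) g) = g;
  gmul_r : forall g, gmul (gmul g (ginv g)) g = g
}.

Definition gd (G : groupoid) (g : G) : G := gmul (ginv g) g.
Definition gr (G : groupoid) (g : G) : G := gmul g (ginv g).

Definition G0 (G : groupoid) : {set G} := [set gd g | g : G].
Definition Sset (G : groupoid) (e : G) : {set G} := [set g | gd g == e].
Definition Tset (G : groupoid) (e : G) : {set G} := [set g | gr g == e].
Definition nEF (G : groupoid) (e f : G) : nat := #|Tset e :&: Sset f|.

Record nuAlg (K : comPzRingType) := NuAlg {
  nu_car :> lmodType K;
  nu_mul : nu_car -> nu_car -> nu_car;
  nu_mulA : associative nu_mul;
  nu_mulDl : left_distributive nu_mul +%R;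
  nu_mulDr : right_distributive nu_mul +%R;
  nu_scaleAl : forall (k : K) x y, k *: nu_mul x y = nu_mul (k *: x) y;
  nu_scaleAr : forall (k : K) x y, k *: nu_mul x y = nu_mul x (k *: y)
}.

Section Defs.
Variables (K : comPzRingType) (G : groupoid) (R : nuAlg K).
Local Notation "x ** y" := (nu_mul x y) (at level 40, left associativity).

Definition is_ideal (I : R -> Prop) : Prop :=
  [/\ I 0,
      forall x y, I x -> I y -> I (x + y),
      forall x, I x -> I (- x),
      forall x y, I x -> I (x ** y) &
      forall x y, I y -> I (x ** y)].

Record is_action (E : G -> R -> Prop) (beta : G -> R -> R) : Prop := IsAction {
  act_Er : forall g, E g = E (gr g);
  act_ideal : forall g, is_ideal (E g);
  act_mem : forall g x, E (ginv g) x -> E g (beta g x);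
  act_add : forall g x y, E (ginv g) x -> E (ginv g) y ->
    beta g (x + y) = beta g x + beta g y;
  act_mul : forall g x y, E (ginv g) x -> E (ginv g) y ->
    beta g (x ** y) = beta g x ** beta g y;
  act_scale : forall g (k : K) x, E (ginv g) x -> beta g (k *: x) = k *: beta g x;
  act_inj : forall g x y, E (ginv g) x -> E (ginv g) y -> beta g x = beta g y -> x = y;
  act_surj : forall g y, E g y -> exists2 x, E (ginv g) x & beta g x = y;
  act_id : forall e x, e \in G0 G -> E e x -> beta e x = x;
  act_comp : forall g h x, gd g = gr h -> E (ginv h) x ->
    beta g (beta h x) = beta (gmul g h) x
}.

Definition is_unit_of (I : R -> Prop) (u : R) : Prop :=
  I u /\ forall x, I x -> u ** x = x /\ x ** u = x.

Variables (E : G -> R -> Prop) (beta : G -> R -> R).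

(* ---- skew groupoid ring  R *_beta G : a = sum_g a g delta_g ---- *)
Definition skew := G -> R.
Definition skew_mul (a b : skew) : skew := fun g =>
  \sum_(g1 : G) \sum_(g2 : G | (gd g1 == gr g2) && (gmul g1 g2 == g))
     a g1 ** beta g1 (b g2).
(* v_k . a  (homogeneous component of degree k) *)
Definition skew_comp (k : G) (a : skew) : skew := fun g => if g == k then a g else 0.

(* ---- B = (R *_beta G) # KG^* : X = sum_h (X h) # v_h ---- *)
Definition Bcar := G -> skew.
Definition B_add (X Y : Bcar) : Bcar := fun h g => X h g + Y h g.
Definition B_scale (k : K) (X : Bcar) : Bcar := fun h g => k *: X h g.
(* (a # v_g)(b # v_h) = a (v_{g h^-1} . b) # v_h if d g = d h, 0 otherwise *)
Definition B_mul (X Y : Bcar) : Bcar := fun h k =>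
  \sum_(g : G | gd g == gd h) skew_mul (X g) (skew_comp (gmul g (ginv h)) (Y h)) k.
Definition in_B (X : Bcar) : Prop := forall h g, E g (X h g).
Definition in_B0 (X : Bcar) : Prop :=
  in_B X /\ forall h g, ~~ ((gd g == gr g) && (gr g == gr h)) -> X h g = 0.

Variable one : G -> R.
Definition B0_one : Bcar := fun h g => if g == gr h then one (gr h) else 0.

(* ---- target: (+)_{e in G_0} (+)_{f in G_0, T_e cap S_f <> 0} M_{n_{e,f}}(E_e) ---- *)
Definition tgt_idx (e f : G) : bool :=
  [&& e \in G0 G, f \in G0 G & Tset e :&: Sset f != set0].
Definition Tcar := forall e f : G, 'M[R]_(nEF e f).
Definition in_T (x : Tcar) : Prop :=
  forall e f, (forall i j, E e (x e f i j)) /\ (~~ tgt_idx e f -> x e f = 0).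
Definition T_add (x y : Tcar) : Tcar := fun e f => x e f + y e f.
Definition T_scale (k : K) (x : Tcar) : Tcar := fun e f => map_mx (fun r => k *: r) (x e f).
Definition T_mul (x y : Tcar) : Tcar := fun e f =>
  \matrix_(i, j) \sum_(l < nEF e f) x e f i l ** y e f l j.
Definition T_one : Tcar := fun e f =>
  \matrix_(i, j) (if tgt_idx e f && (i == j) then one e else 0).

End Defs.

(* Main.v *)
Require Import Defs.
From HB Require Import structures.
From mathcomp Require Import all_boot all_order all_algebra.
From Stdlib Require Import FunctionalExtensionality.
Local Open Scope ring_scope.
Import GRing.Theory.

Section Gpd.
Variable G : groupoid.
Implicit Types a b c g h : G.
Local Notation m := (@gmul G).
Local Notation i := (@ginv G).

Lemma d_inv g : gd (i g) = gr g.
Proof. by rewrite /gd /gr ginvK. Qed.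
Lemma r_inv g : gr (i g) = gd g.
Proof. by rewrite /gd /gr ginvK. Qed.
Lemma mA a b c : gd a = gr b -> gd b = gr c -> m (m a b) c = m a (m b c).
Proof. exact: gmulA. Qed.
Lemma d_m a b : gd a = gr b -> gd (m a b) = gd b.
Proof. exact: gd_mul. Qed.
Lemma r_m a b : gd a = gr b -> gr (m a b) = gr a.
Proof. exact: gr_mul. Qed.
Lemma m_d g : m g (gd g) = g.
Proof. exact: gmul_d. Qed.
Lemma m_r g : m (gr g) g = g.
Proof. exact: gmul_r. Qed.
Lemma dd g : gd (gd g) = gd g.
Proof. exact: d_m _ _ (d_inv g). Qed.
Lemma rd g : gr (gd g) = gd g.
Proof. by have := r_m _ _ (d_inv g); rewrite r_inv. Qed.
Lemma dr g : gd (gr g) = gr g.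
Proof. by rewrite -[gr g]d_inv dd. Qed.
Lemma rr g : gr (gr g) = gr g.
Proof. by rewrite -[gr g]d_inv rd. Qed.
Lemma G0P e : (e \in G0 G) = (gd e == e).
Proof.
apply/imsetP/eqP => [[g _ ->]|<-]; first exact: dd.
by exists e.
Qed.
Lemma G0d g : gd g \in G0 G. Proof. by rewrite G0P dd. Qed.
Lemma G0r g : gr g \in G0 G. Proof. by rewrite G0P dr. Qed.
Lemma G0_r e : e \in G0 G -> gr e = e.
Proof. by rewrite G0P => /eqP <-; rewrite rd. Qed.

Lemma rcan a b c : gd a = gr c -> gd b = gr c -> m a c = m b c -> a = b.
Proof.
have H x : gd x = gr c -> x = m (m x c) (i c).
  by move=> Hx; rewrite mA ?r_inv // -/(gr c) -Hx m_d.
by move=> Ha Hb Hab; rewrite (H a Ha) (H b Hb) Hab.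
Qed.

Lemma d_mV a b : gd a = gd b -> gd (m a (i b)) = gr b.
Proof. by move=> H; rewrite d_m ?d_inv // r_inv. Qed.
Lemma r_mV a b : gd a = gd b -> gr (m a (i b)) = gr a.
Proof. by move=> H; rewrite r_m // r_inv. Qed.
Lemma mVm a b : gd a = gd b -> m (m a (i b)) b = a.
Proof.
by move=> H; rewrite mA ?r_inv ?d_inv // -/(gd b) -H m_d.
Qed.
Lemma mVmV a b c : gd a = gd b -> gd b = gd c ->
  m (m a (i b)) (m b (i c)) = m a (i c).
Proof.
move=> H1 H2.
have Hbc : gd b = gr (i c) by rewrite r_inv.
have e1 : m (i b) (m b (i c)) = i c.
  by rewrite -mA ?d_inv // -/(gd b) Hbc m_r.
by rewrite mA ?e1 // ?r_inv // d_inv r_m.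
Qed.
Lemma mV_eq_r a b : gd a = gd b -> (m a (i b) == gr b) = (a == b).
Proof.
move=> H; apply/eqP/eqP => [E|->]; last by [].
by apply: (rcan a b (i b)); rewrite ?r_inv ?E // -/(gr b).
Qed.
Lemma mmV a b : gd a = gr b -> m (m a b) (i b) = a.
Proof. by move=> H; rewrite mA ?r_inv // -/(gr b) -H m_d. Qed.
End Gpd.

Set Implicit Arguments. Unset Strict Implicit.

Section Alg.
Variables (K : comPzRingType) (G : groupoid) (R : nuAlg K).
Variables (E : G -> R -> Prop) (beta : G -> R -> R) (one : G -> R).
Hypothesis A : is_action E beta.
Hypothesis Hone : forall e, e \in G0 G -> is_unit_of (E e) (one e).
Local Notation "x ** y" := (nu_mul x y) (at level 40, left associativity).
Local Notation m := (@gmul G).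
Local Notation i := (@ginv G).

Lemma mul0r' (x : R) : 0 ** x = 0.
Proof. by apply: (addrI (0 ** x)); rewrite -nu_mulDl !addr0. Qed.
Lemma mulr0' (x : R) : x ** 0 = 0.
Proof. by apply: (addrI (x ** 0)); rewrite -nu_mulDr !addr0. Qed.

Lemma E0 g : E g 0. Proof. by case: (act_ideal A g). Qed.
Lemma ED g x y : E g x -> E g y -> E g (x + y). Proof. by case: (act_ideal A g) => _ H _ _ _; apply: H. Qed.
Lemma EMl g x y : E g x -> E g (x ** y). Proof. by case: (act_ideal A g) => _ _ _ H _; apply: H. Qed.
Lemma EMr g x y : E g y -> E g (x ** y). Proof. by case: (act_ideal A g) => _ _ _ _ H; apply: H. Qed.
Lemma Etr g g' x : gr g = gr g' -> E g x -> E g' x.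
Proof. by move=> H; rewrite (act_Er A g) (act_Er A g') H. Qed.
Lemma Esum g (I : Type) (s : seq I) (P : pred I) (F : I -> R) :
  (forall x, P x -> E g (F x)) -> E g (\sum_(x <- s | P x) F x).
Proof. by move=> H; apply: big_ind => //; [exact: E0|exact: ED]. Qed.

Lemma beta0 g : beta g 0 = 0.
Proof.
apply: (addrI (beta g 0)); rewrite addr0 -(act_add A) ?addr0 //; exact: E0.
Qed.
Lemma beta_sum g (I : Type) (s : seq I) (P : pred I) (F : I -> R) :
  (forall x, P x -> E (i g) (F x)) ->
  beta g (\sum_(x <- s | P x) F x) = \sum_(x <- s | P x) beta g (F x).
Proof.
move=> H; elim: s => [|x s IH]; first by rewrite !big_nil beta0.
rewrite !big_cons; case: ifP => Px //.
by rewrite (act_add A) ?IH //; [exact: H|exact: Esum].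
Qed.

Lemma sum_if_eq (T : finType) (P : pred T) (c : T) (F : T -> R) :
  \sum_(x | P x) (if x == c then F x else 0) = if P c then F c else 0.
Proof.
case Pc: (P c).
  rewrite (bigD1 c) //= eqxx big1 ?addr0 // => x /andP[_ /negbTE ->] //.
by apply: big1 => x Px; case: eqP => // E1; rewrite E1 Pc in Px.
Qed.

Definition ev (e f : G) (a : 'I_(nEF e f)) : G := @enum_val G (Tset e :&: Sset f) a.
Arguments ev {e f} a.
Definition piv (e f : G) : G := odflt e [pick x in Tset e :&: Sset f].
Definition w (e f : G) (a : 'I_(nEF e f)) : G := m (piv e f) (i (ev a)).
Arguments w {e f} a.

Lemma inN (e f : G) (x : G) : (x \in Tset e :&: Sset f) = (gr x == e) && (gd x == f).
Proof. by rewrite /Tset /Sset !inE. Qed.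
Lemma evN (e f : G) (a : 'I_(nEF e f)) : ev a \in Tset e :&: Sset f.
Proof. exact: enum_valP. Qed.
Lemma evP (e f : G) (a : 'I_(nEF e f)) : gr (ev a) = e /\ gd (ev a) = f.
Proof. by have := evN a; rewrite inN => /andP[/eqP -> /eqP ->]. Qed.
Lemma pivP (e f : G) (a : 'I_(nEF e f)) : gr (piv e f) = e /\ gd (piv e f) = f.
Proof.
rewrite /piv; case: pickP => [x|/(_ (ev a))].
  by rewrite inN => /andP[/eqP -> /eqP ->].
by rewrite evN.
Qed.
Lemma tgtP (e f : G) (a : 'I_(nEF e f)) : tgt_idx e f.
Proof.
case: (evP a) => H1 H2.
have He : e \in G0 G by rewrite -H1 G0r.
have Hf : f \in G0 G by rewrite -H2 G0d.
rewrite /tgt_idx He Hf /=.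
by apply/set0Pn; exists (ev a); rewrite inN H1 H2 !eqxx.
Qed.

Lemma sum_if_eqT (T : finType) (c : T) (F : T -> R) :
  \sum_x (if x == c then F x else 0) = F c.
Proof. by rewrite (sum_if_eq xpredT). Qed.

Lemma B0sup X h g : in_B0 E X -> ~~((gd g == gr g) && (gr g == gr h)) -> X h g = 0.
Proof. by case=> _ H; apply: H. Qed.
Lemma B0in X h g : in_B0 E X -> E g (X h g).
Proof. by case=> H _; apply: H. Qed.

Section Fix.
Variables e f : G.
Variables a b : 'I_(nEF e f).
Lemma gab_d : gd (m (ev a) (i (ev b))) = e.
Proof. by case: (evP a) (evP b) => _ H1 [H2 H3]; rewrite d_mV -?H2 // H1 H3. Qed.
Lemma gab_r : gr (m (ev a) (i (ev b))) = e.
Proof. by case: (evP a) (evP b) => H0 H1 [H2 H3]; rewrite r_mV // H1 H3. Qed.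
Lemma w_r : gr (w a) = e.
Proof.
case: (evP a) (pivP a) => H0 H1 [H2 H3]; rewrite /w r_m // r_inv H3 //.
Qed.
Lemma w_d : gd (w a) = e.
Proof.
case: (evP a) (pivP a) => H0 H1 [H2 H3]; rewrite /w d_mV // H3 //.
Qed.
Lemma e_G0 : e \in G0 G.
Proof. by case: (evP a) => H _; rewrite -H G0r. Qed.
Lemma Ee_iw x : E e x -> E (i (w a)) x.
Proof. by apply: Etr; rewrite r_inv w_d G0_r // e_G0. Qed.
Lemma Ew_e x : E (w a) x -> E e x.
Proof. by apply: Etr; rewrite w_r G0_r // e_G0. Qed.
Lemma Ee_w x : E e x -> E (w a) x.
Proof. by apply: Etr; rewrite w_r G0_r // e_G0. Qed.
Lemma B0_ab X : in_B0 E X -> E e (X (ev b) (m (ev a) (i (ev b)))).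
Proof. by move=> HX; apply: (Etr _ (B0in _ _ HX)); rewrite gab_r G0_r // e_G0. Qed.
End Fix.

Definition phi (X : Bcar G R) : Tcar G R := fun e f =>
  \matrix_(a, b) beta (w a) (X (ev b) (m (ev a) (i (ev b)))).

Lemma phi_T X : in_B0 E X -> in_T E (phi X).
Proof.
move=> HX e f; split.
  move=> a b; rewrite /phi mxE; apply: (@Ew_e _ _ a); apply: (act_mem A).
  by apply: Ee_iw; apply: B0_ab.
move=> nt; apply/matrixP => a; by rewrite (tgtP a) in nt.
Qed.

Lemma phi_inj X Y : in_B0 E X -> in_B0 E Y -> phi X = phi Y -> X = Y.
Proof.
move=> HX HY Heq; apply: functional_extensionality => h.
apply: functional_extensionality => g.
case Hs: ((gd g == gr g) && (gr g == gr h)); last first.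
  by rewrite !B0sup ?Hs.
case/andP: Hs => /eqP H1 /eqP H2.
have Hgh : gd g = gr h by rewrite H1 H2.
have hN : h \in Tset (gr h) :&: Sset (gd h) by rewrite inN !eqxx.
have lN : m g h \in Tset (gr h) :&: Sset (gd h).
  by rewrite inN r_m // d_m // H2 !eqxx.
pose b : 'I_(nEF (gr h) (gd h)) := enum_rank_in hN h.
pose a : 'I_(nEF (gr h) (gd h)) := enum_rank_in hN (m g h).
have Eb : ev b = h by rewrite /ev /b enum_rankK_in.
have Ea : ev a = m g h by rewrite /ev /a enum_rankK_in.
have := congr1 (fun t : Tcar G R => t (gr h) (gd h) a b) Heq; rewrite /phi !mxE.
have Ix : E (gr h) (X (ev b) (m (ev a) (i (ev b)))) by apply: B0_ab.
have Iy : E (gr h) (Y (ev b) (m (ev a) (i (ev b)))) by apply: B0_ab.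
move/(act_inj A (@Ee_iw _ _ a _ Ix) (@Ee_iw _ _ a _ Iy)).
by rewrite Ea Eb mmV.
Qed.

Lemma betaK g y : E (gr g) y -> beta g (beta (i g) y) = y.
Proof.
move=> Hy; rewrite (act_comp A) ?r_inv //; last by rewrite ginvK (act_Er A).
by rewrite (act_id A) // G0r.
Qed.

Definition cell (x : Tcar G R) (e f h g : G) : R :=
  if [pick a : 'I_(nEF e f) | ev a == m g h] is Some a then
    if [pick b : 'I_(nEF e f) | ev b == h] is Some b then beta (i (w a)) (x e f a b)
    else 0
  else 0.
Definition preim (x : Tcar G R) : Bcar G R := fun h g =>
  if (gd g == gr g) && (gr g == gr h) then cell x (gr h) (gd h) h g else 0.

Lemma cell_ev x e f (a b : 'I_(nEF e f)) :
  cell x e f (ev b) (m (ev a) (i (ev b))) = beta (i (w a)) (x e f a b).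
Proof.
case: (evP a) (evP b) => _ H1 [_ H2].
rewrite /cell; case: pickP => [a' /eqP Ha'|/(_ a)]; last by rewrite mVm ?eqxx // H1 H2.
rewrite mVm ?H1 ?H2 // in Ha'; move/enum_val_inj: Ha' => ->.
case: pickP => [b' /eqP /enum_val_inj -> //|/(_ b)]; by rewrite eqxx.
Qed.

Lemma preim_B0 x : in_T E x -> in_B0 E (preim x).
Proof.
move=> Hx; split => h g; rewrite /preim; last by move/negbTE ->.
case: ifP => [/andP[/eqP H1 /eqP H2]|_]; last exact: E0.
rewrite /cell; case: pickP => [a _|_]; last exact: E0.
case: pickP => [b _|_]; last exact: E0.
apply: (Etr (g := i (w a))); first by rewrite r_inv w_d H2.
apply: (act_mem A); rewrite ginvK; apply: Ee_w; by case: (Hx (gr h) (gd h)) => H _; apply: H.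
Qed.

Lemma preimK x : in_T E x -> phi (preim x) = x.
Proof.
move=> Hx; apply: functional_extensionality_dep => e.
apply: functional_extensionality_dep => f.
apply/matrixP => a b; rewrite /phi mxE /preim.
case: (evP b) => Hr Hd.
rewrite gab_d gab_r Hr eqxx /= Hd cell_ev betaK //.
rewrite (@w_r _ _ a); by case: (Hx e f) => H _; apply: H.
Qed.

Lemma phi_add X Y : in_B0 E X -> in_B0 E Y -> phi (B_add X Y) = T_add (phi X) (phi Y).
Proof.
move=> HX HY; apply: functional_extensionality_dep => e.
apply: functional_extensionality_dep => f.
apply/matrixP => a b; rewrite /phi /T_add /B_add !mxE (act_add A) //;
  by apply: Ee_iw; apply: B0_ab.
Qed.

Lemma phi_scale k X : in_B0 E X -> phi (B_scale k X) = T_scale k (phi X).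
Proof.
move=> HX; apply: functional_extensionality_dep => e.
apply: functional_extensionality_dep => f.
apply/matrixP => a b; rewrite /phi /T_scale /B_scale !mxE (act_scale A) //.
by apply: Ee_iw; apply: B0_ab.
Qed.

Lemma beta_unit g e : e \in G0 G -> gr g = e -> gd g = e -> beta g (one e) = one e.
Proof.
move=> He Hr Hd; case: (Hone He) => Ie Hu.
have Ig : E (i g) (one e) by apply: (Etr _ Ie); rewrite r_inv Hd G0_r.
have Ig' : E g (one e) by apply: (Etr _ Ie); rewrite Hr G0_r.
case: (act_surj A Ig') => z Iz Hz.
have Ize : E e z by apply: (Etr _ Iz); rewrite r_inv Hd G0_r.
have Iu : E e (beta g (one e)) by apply: (Etr _ (act_mem A Ig)); rewrite Hr G0_r.
have H1 : beta g (one e) ** one e = one e.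
  by rewrite -{2 3}Hz -(act_mul A) // (proj1 (Hu _ Ize)).
by rewrite -{2}H1 (proj2 (Hu _ Iu)).
Qed.

Lemma phi_one : phi (B0_one one) = T_one one.
Proof.
apply: functional_extensionality_dep => e.
apply: functional_extensionality_dep => f.
apply/matrixP => a b; rewrite /phi /T_one /B0_one !mxE (tgtP a) /=.
case: (evP a) (evP b) => Ha1 Ha2 [Hb1 Hb2].
rewrite mV_eq_r ?Ha2 ?Hb2 //.
have -> : (ev a == ev b) = (a == b) by apply/eqP/eqP => [/enum_val_inj|->].
case: eqP => [<-|_]; last exact: beta0.
rewrite Ha1 beta_unit ?(e_G0 a) ?w_r ?w_d //.
Qed.

Lemma cond_g1 p q g g1 : gd p = gd g -> gd g = gd q ->
  ((gd g1 == gr (m g (i q))) && (m g1 (m g (i q)) == m p (i q))) = (g1 == m p (i g)).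
Proof.
move=> H1 H2; have Hc : gr (m g (i q)) = gr g by rewrite r_mV.
apply/andP/eqP => [[/eqP Hd /eqP Hm]|->].
  apply: (@rcan G _ _ (m g (i q))) => //; first by rewrite Hc d_mV.
  by rewrite Hm mVmV.
by rewrite Hc d_mV // mVmV // eqxx.
Qed.

Lemma Bmul_red X Y e f p q : in_B0 E X -> in_B0 E Y ->
  gr p = e -> gd p = f -> gr q = e -> gd q = f ->
  B_mul beta X Y q (m p (i q)) =
  \sum_(l in Tset e :&: Sset f) X l (m p (i l)) ** beta (m p (i l)) (Y q (m l (i q))).
Proof.
move=> HX HY Hpr Hpd Hqr Hqd.
rewrite /B_mul /skew_mul /skew_comp big_mkcond [RHS]big_mkcond /=.
apply: eq_bigr => g _; rewrite inN Hqd.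
case: eqP => Hd; last by rewrite andbF.
rewrite andbT; case: eqP => Hr.
  rewrite (eq_bigr (fun g1 => if g1 == m p (i g) then
       X g g1 ** beta g1 (Y q (m g (i q))) else 0)); first by rewrite sum_if_eqT.
  move=> g1 _.
  rewrite (eq_bigr (fun g2 => if g2 == m g (i q) then X g g1 ** beta g1 (Y q g2) else 0));
    last by move=> g2 _; case: eqP => _ //; rewrite beta0 mulr0'.
  by rewrite sum_if_eq cond_g1 // ?Hpd ?Hd ?Hqd.
apply: big1 => g1 _; apply: big1 => g2 _.
case: eqP => [->|_]; last by rewrite beta0 mulr0'.
rewrite (B0sup HY) ?beta0 ?mulr0' //.
by rewrite r_mV ?Hd ?Hqd // Hqr; move/eqP: Hr => /negbTE ->; rewrite andbF.
Qed.

Lemma Bmul_B0 X Y : in_B0 E X -> in_B0 E Y -> in_B0 E (B_mul beta X Y).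
Proof.
move=> HX HY; split => h k.
  rewrite /B_mul /skew_mul; apply: Esum => g _; apply: Esum => g1 _.
  apply: Esum => g2 /andP[/eqP H1 /eqP H2].
  apply: (Etr (g := g1)); first by rewrite -H2 r_m.
  by apply: EMl; apply: B0in.
move=> Hk; rewrite /B_mul /skew_mul /skew_comp.
apply: big1 => g /eqP Hg; apply: big1 => g1 _; apply: big1 => g2 /andP[/eqP H1 /eqP H2].
case: eqP => [E2|_]; last by rewrite beta0 mulr0'.
case HY2: ((gd g2 == gr g2) && (gr g2 == gr h)); last first.
  by rewrite (B0sup HY) ?HY2 ?beta0 ?mulr0'.
case HX1: ((gd g1 == gr g1) && (gr g1 == gr g)); last first.
  by rewrite (B0sup HX) ?HX1 ?mul0r'.
case/andP: HY2 => /eqP Y1 /eqP Y2; case/andP: HX1 => /eqP X1 /eqP X2.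
have Hc : gr g2 = gr g by rewrite E2 r_mV.
move: Hk; rewrite -H2 d_m // r_m // Y1 Y2 X2 -Hc Y2 !eqxx.
by [].
Qed.

Lemma phi_mul X Y : in_B0 E X -> in_B0 E Y ->
  phi (B_mul beta X Y) = T_mul (phi X) (phi Y).
Proof.
move=> HX HY; apply: functional_extensionality_dep => e.
apply: functional_extensionality_dep => f.
apply/matrixP => a b; rewrite /phi /T_mul !mxE.
case: (evP a) (evP b) => Har Had [Hbr Hbd]; case: (pivP a) => Hpr Hpd.
rewrite (Bmul_red HX HY Har Had Hbr Hbd).
have He : e \in G0 G by rewrite -Har G0r.
have Iw : forall x, E e x -> E (i (w a)) x.
  by move=> x; apply: Etr; rewrite r_inv (@w_d _ _ a) G0_r.
rewrite beta_sum; last first.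
  move=> l; rewrite inN => /andP[/eqP Hlr /eqP Hld]; apply: Iw; apply: EMl.
  by apply: (Etr _ (B0in _ _ HX)); rewrite r_mV ?Hld // Har G0_r.
rewrite big_enum_val; apply: eq_bigr => c _; rewrite !mxE.
case: (evP c) => Hcr Hcd.
have Hx : E e (X (ev c) (m (ev a) (i (ev c)))).
  by apply: (Etr _ (B0in _ _ HX)); rewrite r_mV ?Hcd // Har G0_r.
have Hy : E (i (m (ev a) (i (ev c)))) (Y (ev b) (m (ev c) (i (ev b)))).
  by apply: (Etr _ (B0in _ _ HY)); rewrite r_inv d_mV ?r_mV ?Hcd ?Hbd.
rewrite (act_mul A) ?(act_comp A) //; first by rewrite /w mVmV ?Hpd ?Had ?Hcd.
- by rewrite (@w_d _ _ a) r_mV ?Hcd.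
- exact: Iw.
- apply: Iw; apply: (Etr (g := m (ev a) (i (ev c)))); first by rewrite r_mV ?Hcd // Har G0_r.
  exact: (act_mem A).
Qed.

Lemma T_one_l x : in_T E x -> T_mul (T_one one) x = x.
Proof.
move=> Hx; apply: functional_extensionality_dep => e.
apply: functional_extensionality_dep => f.
apply/matrixP => a b; rewrite /T_mul mxE.
rewrite (eq_bigr (fun c => if c == a then x e f c b else 0)); first by rewrite sum_if_eqT.
move=> c _; rewrite /T_one mxE (tgtP a) /= eq_sym; case: eqP => [->|_]; last exact: mul0r'.
case: (Hone (e_G0 a)) => _ H; apply: (proj1 (H _ _)).
by case: (Hx e f) => H1 _; apply: H1.
Qed.

Lemma T_one_r x : in_T E x -> T_mul x (T_one one) = x.
Proof.
move=> Hx; apply: functional_extensionality_dep => e.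
apply: functional_extensionality_dep => f.
apply/matrixP => a b; rewrite /T_mul mxE.
rewrite (eq_bigr (fun c => if c == b then x e f a c else 0)); first by rewrite sum_if_eqT.
move=> c _; rewrite /T_one mxE (tgtP a) /=; case: eqP => [->|_]; last exact: mulr0'.
case: (Hone (e_G0 a)) => _ H; apply: (proj2 (H _ _)).
by case: (Hx e f) => H1 _; apply: H1.
Qed.

Lemma B0one_in : in_B0 E (B0_one one).
Proof.
split=> h g; rewrite /B0_one.
  case: eqP => [->|_]; last exact: E0.
  by case: (Hone (@G0r _ h)).
by move=> H; case: eqP => // Hg; rewrite Hg dr rr !eqxx in H.
Qed.
End Alg.

Theorem theorem3p7 (K : comPzRingType) (G : groupoid) (R : nuAlg K)
    (E : G -> R -> Prop) (beta : G -> R -> R) (one : G -> R) :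
  is_action E beta ->
  (forall e, e \in G0 G -> is_unit_of (E e) (one e)) ->
  [/\ in_B0 E (B0_one one),
      (forall X Y, in_B0 E X -> in_B0 E Y -> in_B0 E (B_mul beta X Y)),
      (forall X, in_B0 E X ->
         B_mul beta (B0_one one) X = X /\ B_mul beta X (B0_one one) = X) &
   exists phi : Bcar G R -> Tcar G R,
     (forall X, in_B0 E X -> in_T E (phi X)) /\
     (forall X Y, in_B0 E X -> in_B0 E Y -> phi X = phi Y -> X = Y) /\
     (forall x, in_T E x -> exists2 X, in_B0 E X & phi X = x) /\
     (forall X Y, in_B0 E X -> in_B0 E Y -> phi (B_add X Y) = T_add (phi X) (phi Y)) /\
     (forall (k : K) X, in_B0 E X -> phi (B_scale k X) = T_scale k (phi X)) /\
     (forall X Y, in_B0 E X -> in_B0 E Y ->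
         phi (B_mul beta X Y) = T_mul (phi X) (phi Y)) /\
     phi (B0_one one) = T_one one].
Proof.
move=> A Hone.
have O := B0one_in A Hone.
split.
- exact: O.
- move=> X Y HX HY; exact: (Bmul_B0 A HX HY).
- move=> X HX; split; apply: (phi_inj A) => //; try exact: (Bmul_B0 A).
    by rewrite (phi_mul A) // (phi_one A Hone) (T_one_l Hone) //; apply: phi_T.
  by rewrite (phi_mul A) // (phi_one A Hone) (T_one_r Hone) //; apply: phi_T.
- exists (phi beta); split; first by move=> X; apply: (phi_T A).
  split; first by move=> X Y; apply: (phi_inj A).
  split; first by move=> x Hx; exists (preim beta x); [exact: (preim_B0 A)|exact: (preimK A)].
  split; first by move=> X Y; apply: (phi_add A).
  split; first by move=> k X; apply: (phi_scale A).
  split; first by move=> X Y; apply: (phi_mul A).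
  exact: (phi_one A Hone).
Qed.
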